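(* For every $n\ge2$ and $m\in\{0,1,2,3\}$ let $U_{n,m}=\sum_{k=0}^{n-2}\frac{k^m(n+k-2)!}{k!\,2^k}$ (with $0^0=1$). Then $U_{n,0}=(2n-4)!!$, $U_{n,1}=(n-1)(2n-4)!!-(2n-3)!!$, $U_{n,2}=(n^2-1)(2n-4)!!-(2n-1)(2n-3)!!$, $U_{n,3}=(n^3+3n^2-3n-1)(2n-4)!!-(3n^2+n-1)(2n-3)!!$.
   Context: Double factorials: $(2m-1)!!=(2m-1)(2m-3)\cdots3\cdot1$, $(2m)!!=(2m)(2m-2)\cdots2$, with $0!!=1$. *)

(* Defs.v *)
From mathcomp Require Import all_boot all_order all_algebra.
Set Implicit Arguments. Unset Strict Implicit. Unset Printing Implicit Defensive.
Import Order.TTheory GRing.Theory Num.Theory.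

Fixpoint dfact (n : nat) : nat :=
  match n with
  | 0 => 1
  | 1 => 1
  | (k.+2) as n' => n' * dfact k
  end.

Local Open Scope ring_scope.

Definition U (n m : nat) : rat :=
  \sum_(0 <= k < n.-1)
     ((k ^ m * (n + k - 2)`!)%:R / ((k`!)%:R * 2 ^+ k)).

(* Main.v *)
Require Import Defs.
From mathcomp Require Import all_boot all_order all_algebra.
From mathcomp Require Import ring zify.
Import Order.TTheory GRing.Theory Num.Theory.
Local Open Scope ring_scope.

Definition a (p k : nat) : rat := ((p + k)`!)%:R / ((k`!)%:R * 2 ^+ k).

Lemma factr_neq0 k : (k`!)%:R != 0 :> rat.
Proof. by rewrite pnatr_eq0 -lt0n fact_gt0. Qed.

Lemma A1 p k : a p k.+1 * (k.+1)%:R = a p.+1 k / 2.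
Proof.
rewrite /a addnS -addSn factS natrM exprS.
have := factr_neq0 k => h.
field. rewrite h expf_neq0 //= nat1r pnatr_eq0 //.
Qed.

Lemma A2 p k : a p.+1 k = (p.+1 + k)%:R * a p k.
Proof. by rewrite /a addSn factS natrM mulrA. Qed.

Definition D1 p : rat := (dfact (2 * p).+1)%:R.
Definition D0 p : rat := (dfact (2 * p))%:R.

Lemma D0S p : D0 p.+1 = (2 * p%:R + 2) * D0 p.
Proof.
rewrite /D0 mulnS add2n /= natrM; congr (_ * _).
by rewrite -addn2 natrD natrM.
Qed.

Lemma D1S p : D1 p.+1 = (2 * p%:R + 3) * D1 p.
Proof.
rewrite /D1 mulnS add2n /= natrM; congr (_ * _).
by rewrite -addn3 natrD natrM.
Qed.

Lemma A3 p : a p.+1 p.+1 = a p.+1 p.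
Proof.
have h1 := A1 p.+1 p. rewrite [a p.+2 p]A2 in h1.
have hp : (p.+1)%:R != 0 :> rat by rewrite pnatr_eq0.
apply: (mulIf hp); rewrite h1.
rewrite addSn -natr1 (natrD _ p.+1) -natr1. by field.
Qed.

Lemma A4 p : a p.+1 p = D1 p.
Proof.
elim: p => [|p IH]; first by rewrite /a /D1 /=; by field.
rewrite A2 A3 IH D1S; congr (_ * _).
rewrite addSn -!natr1 natrD -natr1; ring.
Qed.

Definition T m p K : rat := \sum_(0 <= k < K) (k%:R ^+ m) * a p k.

Lemma shift (f : nat -> rat) p K :
  \sum_(0 <= k < K.+1) k%:R * f k * a p k =
  \sum_(0 <= j < K) f j.+1 * a p.+1 j / 2.
Proof.
rewrite big_nat_recl // mul0r mul0r add0r.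
apply: eq_bigr => j _.
by rewrite -[RHS]mulrA -A1; ring.
Qed.

Lemma S0 p : T 0 p p.+1 = D0 p.
Proof.
elim: p => [|p IH].
  by rewrite /T big_nat1 /a /D0 /=; by field.
rewrite D0S -IH.
set X := T 0 p.+1 p.+2.
set S := T 0 p p.+1.
have e2 := A1 p p.
have e1 : X = (p.+1%:R) * (S + a p p.+1) + (X - a p.+1 p) / 2.
  have -> : X - a p.+1 p = \sum_(0 <= j < p.+1) a p.+1 j.
    by rewrite /X /T big_nat_recr //= -A3 expr0 mul1r addrK;
       apply: eq_bigr => j _; rewrite expr0 mul1r.
  rewrite /X /T /S.
  have -> : \sum_(0 <= k < p.+2) k%:R ^+ 0 * a p.+1 k =
     \sum_(0 <= k < p.+2) (p.+1%:R * a p k + k%:R * 1 * a p k).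
    by apply: eq_bigr => k _; rewrite A2 natrD expr0; ring.
  rewrite big_split /= -mulr_sumr shift big_nat_recr //= mulr_suml.
  congr (_ * (_ + _) + _).
    by apply: eq_bigr => k _; rewrite expr0 mul1r.
  by apply: eq_bigr => k _; rewrite mul1r.
have e3 : X - X / 2 = p.+1%:R * S.
  by rewrite {1}e1 mulrDr [p.+1%:R * a p p.+1]mulrC e2; ring.
transitivity (2 * (X - X / 2)); first by field.
by rewrite e3 -natr1; ring.
Qed.

Lemma Sh (f : nat -> rat) p :
  \sum_(0 <= k < p.+1) k%:R * f k * a p k =
  (\sum_(0 <= j < p.+2) f j.+1 * a p.+1 j - f p.+1 * D1 p - f p.+2 * D1 p) / 2.
Proof.
rewrite shift !big_nat_recr //= A3 A4 -mulr_suml; congr (_ / 2); by rewrite (addrAC _ (f p.+2 * D1 p)) !addrK.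
Qed.

Lemma S1 p : T 1 p p.+1 = (p%:R + 1) * D0 p - D1 p.
Proof.
have -> : T 1 p p.+1 = \sum_(0 <= k < p.+1) k%:R * (fun _ => 1) k * a p k.
  by apply: eq_bigr => k _; rewrite expr1 mulr1.
rewrite Sh.
have -> : \sum_(0 <= j < p.+2) 1 * a p.+1 j = T 0 p.+1 p.+2.
  by apply: eq_bigr => k _; rewrite expr0.
rewrite S0 D0S; by field.
Qed.

Lemma S2 p : T 2 p p.+1 = ((p%:R + 2) ^+ 2 - 1) * D0 p - (2 * (p%:R + 2) - 1) * D1 p.
Proof.
have -> : T 2 p p.+1 = \sum_(0 <= k < p.+1) k%:R * (fun k => k%:R) k * a p k.
  by apply: eq_bigr => k _; rewrite expr2.
rewrite Sh.
have -> : \sum_(0 <= j < p.+2) j.+1%:R * a p.+1 j = T 1 p.+1 p.+2 + T 0 p.+1 p.+2.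
  rewrite -big_split; apply: eq_bigr => k _ /=; rewrite -natr1; ring.
rewrite S0 S1 D0S D1S -!natr1; by field.
Qed.

Lemma S3 p : T 3 p p.+1 = ((p%:R + 2) ^+ 3 + 3 * (p%:R + 2) ^+ 2 - 3 * (p%:R + 2) - 1) * D0 p
   - (3 * (p%:R + 2) ^+ 2 + (p%:R + 2) - 1) * D1 p.
Proof.
have -> : T 3 p p.+1 = \sum_(0 <= k < p.+1) k%:R * (fun k => k%:R ^+ 2) k * a p k.
  by apply: eq_bigr => k _; rewrite exprS mulrA.
rewrite Sh.
have -> : \sum_(0 <= j < p.+2) j.+1%:R ^+ 2 * a p.+1 j
   = T 2 p.+1 p.+2 + 2 * T 1 p.+1 p.+2 + T 0 p.+1 p.+2.
  rewrite mulr_sumr -!big_split; apply: eq_bigr => k _ /=; rewrite -natr1; ring.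
rewrite S0 S1 S2 D0S D1S -!natr1; by field.
Qed.

Lemma UT n m : U n.+2 m = T m n n.+1.
Proof.
rewrite /U /T; apply: eq_bigr => k _.
by rewrite natrM natrX /a addSn addSn subn2 /= mulrA.
Qed.

Theorem lemma10 (n : nat) (hn : (2 <= n)%N) :
  [/\ U n 0 = (dfact (2 * n - 4))%:R,
      U n 1 = (n%:R - 1) * (dfact (2 * n - 4))%:R - (dfact (2 * n - 3))%:R,
      U n 2 = (n%:R ^+ 2 - 1) * (dfact (2 * n - 4))%:R
              - (2 * n%:R - 1) * (dfact (2 * n - 3))%:R
    & U n 3 = (n%:R ^+ 3 + 3 * n%:R ^+ 2 - 3 * n%:R - 1) * (dfact (2 * n - 4))%:R
              - (3 * n%:R ^+ 2 + n%:R - 1) * (dfact (2 * n - 3))%:R :> rat].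
Proof.
case: n hn => [|[|p]] // _.
have h4 : (2 * p.+2 - 4 = 2 * p)%N by rewrite !mulnS; lia.
have h3 : (2 * p.+2 - 3 = (2 * p).+1)%N by rewrite !mulnS; lia.
have hn : (p.+2%:R : rat) = p%:R + 2 by rewrite -addn2 natrD.
rewrite h4 h3 !UT hn -/(D0 p) -/(D1 p) S0 S1 S2 S3.
split => //; ring.
Qed.
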